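(* For all integers $k\geq 1$, $V(F_{2k})=V(F_{2k+1})=F_{2k-2}+1$.
   Context: Fibonacci numbers: $F_0=0$, $F_1=1$, $F_{m+2}=F_{m+1}+F_m$. Standard Fibonacci words: $f_{-1}=b$, $f_0=a$, $f_{m+1}=f_mf_{m-1}$. The Fibonacci word ${\bf f}=\lim f_m=abaababa\cdots$, with prefix of length $j$ denoted ${\bf f}(0..j]$. $V(N)$ is the number of factorizations of ${\bf f}(0..N]$ as $f_m^{k_m}\cdots f_0^{k_0}$ with all $k_i\geq 0$ (into standard words $f_i$, $i\geq0$, in non-strictly decreasing order of index), counted up to leading zero exponents; $V(0)=1$. *)

(* Defs.v *)
From HB Require Import structures.
From mathcomp Require Import all_boot.
Set Implicit Arguments. Unset Strict Implicit. Unset Printing Implicit Defensive.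

Fixpoint fib (n : nat) : nat :=
  match n with
  | 0 => 0
  | 1 => 1
  | (m.+1 as p).+1 => fib p + fib m
  end.

Inductive letter := La | Lb.
Definition letter_eqb (x y : letter) : bool :=
  match x, y with La, La | Lb, Lb => true | _, _ => false end.
Lemma letter_eqP : Equality.axiom letter_eqb.
Proof. by case; case; constructor. Qed.
HB.instance Definition _ := hasDecEq.Build letter letter_eqP.

(* Shifted standard Fibonacci words: fw n = f_{n-1}, i.e.
   fw 0 = f_{-1} = b, fw 1 = f_0 = a, fw (n+2) = fw (n+1) ++ fw n. *)
Fixpoint fw (n : nat) : seq letter :=
  match n with
  | 0 => [:: Lb]
  | 1 => [:: La]
  | (m.+1 as p).+1 => fw p ++ fw m
  end.

Definition fword (i : nat) : seq letter := fw i.+1.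

(* Prefix f(0..N] of the infinite Fibonacci word: f_N has length F_{N+2} >= N
   and each f_m is a prefix of f_{m+1}, so this is the length-N prefix of lim f_m. *)
Definition fprefix (N : nat) : seq letter := take N (fword N).

(* The word f_m^{k_m} ... f_0^{k_0} for ks = [:: k_0; k_1; ...; k_m]. *)
Definition fact_word (ks : seq nat) : seq letter :=
  flatten (rev [seq flatten (nseq ik.2 (fword ik.1))
               | ik <- zip (iota 0 (size ks)) ks]).

(* Factorizations counted up to leading zero exponents: normalize by requiring
   the exponent list to have no trailing zero (k_m <> 0), or to be empty. *)
Definition is_factorization (N : nat) (ks : seq nat) : Prop :=
  last 1 ks <> 0 /\ fact_word ks = fprefix N.

(* V(N) = c : the set of factorizations of f(0..N] is finite of cardinality c. *)
Definition V_is (N c : nat) : Prop :=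
  exists s : seq (seq nat),
    [/\ uniq s, (forall ks, ks \in s <-> is_factorization N ks) & size s = c].

Example fw_test : fword 3 = [:: La; Lb; La; La; Lb]. Proof. by []. Qed.
Example fib_test : fib 6 = 8. Proof. by []. Qed.

(* Main.v *)
Require Import Defs.
From mathcomp Require Import all_boot.
From mathcomp Require Import zify.
Set Implicit Arguments. Unset Strict Implicit. Unset Printing Implicit Defensive.


Fixpoint phi (w : seq letter) : seq letter :=
  match w with
  | [::] => [::]
  | La :: w' => La :: Lb :: phi w'
  | Lb :: w' => La :: phi w'
  end.

Lemma phi_cat u v : phi (u ++ v) = phi u ++ phi v.
Proof. by elim: u => [|[] u IH] //=; rewrite IH. Qed.

Lemma phi_flatten L : phi (flatten L) = flatten (map phi L).
Proof. by elim: L => [|x L IH] //=; rewrite phi_cat IH. Qed.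

Lemma fwSS n : fw n.+2 = fw n.+1 ++ fw n. Proof. by []. Qed.

Lemma fw_phi n : phi (fw n) = fw n.+1.
Proof.
suff: phi (fw n) = fw n.+1 /\ phi (fw n.+1) = fw n.+2 by case.
elim: n => [|n [IH1 IH2]]; first by split.
split => //. by rewrite fwSS phi_cat IH1 IH2.
Qed.

Lemma flatten_nseqa k : flatten (nseq k [:: La]) = nseq k La.
Proof. by elim: k => //= k ->. Qed.

Definition gw (ik : nat * nat) := flatten (nseq ik.2 (fword ik.1)).

Lemma zip_iotaS s (ks : seq nat) : zip (iota s.+1 (size ks)) ks = map (fun p : nat * nat => (p.1.+1, p.2)) (zip (iota s (size ks)) ks).
Proof. by elim: ks s => //= x ks IH s; rewrite IH. Qed.

Lemma phi_gw ik : phi (gw ik) = gw (ik.1.+1, ik.2).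
Proof.
case: ik => i m; rewrite /gw /= phi_flatten; congr flatten.
by elim: m => //= m ->; rewrite /fword fw_phi.
Qed.

Lemma fact_word_cons k ks : fact_word (k :: ks) = phi (fact_word ks) ++ nseq k La.
Proof.
rewrite /fact_word /= -/(gw _) rev_cons flatten_rcons /gw /= flatten_nseqa.
congr (_ ++ _).
rewrite zip_iotaS phi_flatten map_rev -map_comp -map_comp.
congr (flatten (rev _)); apply: eq_map => p /=.
by rewrite -/(gw p) phi_gw.
Qed.

Definition isF (w : seq letter) (ks : seq nat) : Prop := last 1 ks <> 0 /\ fact_word ks = w.
Definition CntP (P : seq nat -> Prop) c :=
  exists s : seq (seq nat), [/\ uniq s, (forall ks, ks \in s <-> P ks) & size s = c].
Definition Cnt w c := CntP (isF w) c.

Lemma isF_cons w ks : w <> [::] ->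
  (isF w ks <-> exists k ks' v, [/\ ks = k :: ks', w = phi v ++ nseq k La & isF v ks']).
Proof.
move=> Hw; split.
- case: ks => [|k ks'] [Hl Hf]; first by rewrite -Hf in Hw.
  exists k, ks', (fact_word ks'); split => //; first by rewrite -Hf fact_word_cons.
  split => //. by case: ks' Hl {Hf}.
- move=> [k [ks' [v [Eks Ew [Hl Hf]]]]]; subst ks w v.
  split; last by rewrite fact_word_cons.
  case: ks' Hl Hw => [|x ks'] /= Hl Hw //.
  by case: k Hw.
Qed.

Lemma phi_nil v : phi v = [::] -> v = [::].
Proof. by case: v => [|[] v]. Qed.

Lemma isF_nil ks : isF [::] ks <-> ks = [::].
Proof.
split; last by move=> ->.
elim: ks => [|k ks IH] // [Hl]; rewrite fact_word_cons => Hf.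
have Hk : k = 0 by case: k Hf Hl => // k; case: (phi _).
have Hp : fact_word ks = [::] by apply: phi_nil; move: Hf; case: (phi _).
subst k; clear Hf; case: ks IH Hl Hp => [|x ks] IH //= Hl Hp.
by have := IH (conj Hl Hp).
Qed.

Lemma Cnt_nil : Cnt [::] 1.
Proof. exists [:: [::]]; split => // ks; rewrite inE; split; [by move/eqP -> | by move/isF_nil ->]. Qed.

Lemma cntP_list (L : seq (nat * seq letter * nat)) :
  uniq [seq t.1.1 | t <- L] -> (forall t, t \in L -> Cnt t.1.2 t.2) ->
  CntP (fun ks => exists2 t, t \in L & exists ks', ks = t.1.1 :: ks' /\ isF t.1.2 ks')
       (sumn [seq t.2 | t <- L]).
Proof.
elim: L => [|t L IH] /=.
  move=> _ _; exists [::]; split => // ks; split => //; by case.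
move=> /andP [Hnot Hu] Hc.
have [s2 [U2 M2 S2]] := IH Hu (fun t' Ht' => Hc t' (@mem_behead _ (t :: L) t' Ht')).
have [s1 [U1 M1 S1]] := Hc t (mem_head t L).
exists (map (cons t.1.1) s1 ++ s2); split.
- rewrite cat_uniq U2 andbT map_inj_uniq ?U1 /=; last by move=> ? ? [].
  apply/hasPn => x /M2 [t' Ht' [ks' [-> _]]]; apply/mapP => [[y _ [Ey _]]].
  by move/negP: Hnot; apply; rewrite -Ey; apply/mapP; exists t'.
- move=> ks; rewrite mem_cat; split.
  + case/orP => [/mapP [y /M1 Hy ->] | /M2 [t' Ht' H]].
      by exists t; [exact: mem_head | exists y].
    by exists t' => //; rewrite inE Ht' orbT.
  + move=> [t' Ht' [ks' [-> Hi]]]; move: Ht'; rewrite inE => /predU1P [Et | Ht'].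
      by subst t'; apply/orP; left; apply/mapP; exists ks' => //; apply/M1.
    by apply/orP; right; apply/M2; exists t' => //; exists ks'.
- by rewrite size_cat size_map S1 S2.
Qed.

Lemma cnt_step w (L : seq (nat * seq letter * nat)) c :
  w <> [::] -> uniq [seq t.1.1 | t <- L] ->
  (forall k v, w = phi v ++ nseq k La -> (k, v) \in [seq t.1 | t <- L]) ->
  (forall t, t \in L -> w = phi t.1.2 ++ nseq t.1.1 La) ->
  (forall t, t \in L -> Cnt t.1.2 t.2) ->
  sumn [seq t.2 | t <- L] = c ->
  Cnt w c.
Proof.
move=> Hne HU Hcomp Hw Hc <-.
have [s [U M S]] := cntP_list HU Hc.
exists s; split => // ks; apply: (iff_trans (M ks)); split.
- move=> [t Ht [ks' [-> HF]]]; apply/isF_cons => //.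
  exists t.1.1, ks', t.1.2; split => //; exact: Hw t Ht.
- move/(isF_cons _ Hne) => [k [ks' [v [-> Hwv HF]]]].
  have /mapP [t Ht Et] := Hcomp k v Hwv.
  case: t Ht Et => [[k' v'] c'] Ht /= [Ek Ev]; subst k' v'.
  by exists (k, v, c') => //; exists ks'.
Qed.

Fixpoint dec (w : seq letter) : option (seq letter) :=
  match w with
  | [::] => Some [::]
  | La :: Lb :: w' => omap (cons La) (dec w')
  | La :: w' => omap (cons Lb) (dec w')
  | Lb :: _ => None
  end.

Lemma dec_phi_cat Y s : head La s = La -> dec (phi Y ++ s) = omap (cat Y) (dec s).
Proof.
move=> Hs; elim: Y => [|[] Y IH] /=; first by case: (dec s).
  by rewrite IH; case: (dec s).
have [[r Hr] | Hn] : (exists r, phi Y ++ s = La :: r) \/ phi Y ++ s = [::].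
  case: Y {IH} => [|[] Y] /=; [|by left; eexists|by left; eexists].
  case: s Hs => [|x s] /= Hs; [by right | by left; exists s; rewrite Hs].
  by rewrite Hr -Hr IH; case: (dec s).
move: Hn IH; case: Y => [|[] Y] //=; case: s Hs => //.
Qed.

Lemma dec_phi v : dec (phi v) = Some v.
Proof. have := @dec_phi_cat v [::] erefl. rewrite cats0 => ->. by rewrite /= cats0. Qed.

Lemma split_eq (T : eqType) (x y s t : seq T) : x ++ s = y ++ t -> size s = size t -> x = y /\ s = t.
Proof.
move=> H Hs; have Hx : size x = size y.
  by move: (congr1 size H); rewrite !size_cat Hs => /eqP; rewrite eqn_add2r => /eqP.
by move/eqP: H; rewrite eqseq_cat // => /andP [/eqP -> /eqP ->].
Qed.

Lemma head_take (s : seq letter) m : head La s = La -> head La (take m s) = La.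
Proof. by case: s => [|x s] //=; case: m. Qed.

Lemma decompP Y s k v : phi v ++ nseq k La = phi Y ++ s -> Lb \in s -> head La s = La ->
  [/\ k <= size s, drop (size s - k) s == nseq k La &
      omap (cat Y) (dec (take (size s - k) s)) = Some v].
Proof.
move=> H Hb Hh.
have Hk : k <= size s.
  rewrite leqNgt; apply/negP => Hlt.
  have Hsz := congr1 size H; rewrite !size_cat size_nseq in Hsz.
  have := congr1 (drop (size (phi Y))) H.
  rewrite [in X in _ = X -> _]drop_cat ltnn subnn drop0.
  rewrite drop_cat; case: ifP => Hc.
    lia.
  rewrite drop_nseq => Es; by move: Hb; rewrite -Es mem_nseq andbF.
have Hs : s = take (size s - k) s ++ drop (size s - k) s by rewrite cat_take_drop.
rewrite Hs catA in H.
have Hsz2 : size (nseq k La) = size (drop (size s - k) s) by rewrite size_drop size_nseq; lia.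
have [H1 H2] := split_eq H Hsz2.
split => //; first by rewrite H2.
by rewrite -dec_phi_cat ?head_take // -H1 dec_phi.
Qed.

Lemma decompP0 s k v : phi v ++ nseq k La = s -> head La s = La ->
  [/\ k <= size s, drop (size s - k) s == nseq k La &
      omap (cat [::]) (dec (take (size s - k) s)) = Some v].
Proof.
move=> H Hh.
have Hk : k <= size s by rewrite -H size_cat size_nseq leq_addl.
have Hs : s = take (size s - k) s ++ drop (size s - k) s by rewrite cat_take_drop.
rewrite Hs in H.
have Hsz2 : size (nseq k La) = size (drop (size s - k) s) by rewrite size_drop size_nseq; lia.
have [H1 H2] := split_eq H Hsz2.
split => //; first by rewrite H2.
by rewrite -(@dec_phi_cat [::]) ?head_take // -H1 dec_phi.
Qed.

Lemma nseqS_rcons (k : nat) (x : letter) : nseq k.+1 x = rcons (nseq k x) x.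
Proof. by elim: k => //= k <-. Qed.

Lemma Cnt_bb x : Cnt (x ++ [:: Lb; Lb]) 0.
Proof.
apply: (@cnt_step _ [::]) => //; first by case: x.
move=> k v H; case: k H => [|k] H.
- rewrite cats0 in H; case/lastP: v H => [|v c] H; first by case: x H.
  rewrite -cats1 phi_cat in H; case: c H => /= H.
  + by have [_ E] := split_eq H erefl.
  + rewrite -[x ++ _]/(x ++ [:: Lb] ++ [:: Lb]) catA in H.
    by have [_ E] := split_eq H erefl.
- by have := congr1 (last La) H; rewrite !last_cat nseqS_rcons last_rcons.
Qed.

Ltac comp Y :=
  let k := fresh "k" in let v := fresh "v" in let H := fresh "H" in
  move=> k v H; have := @decompP Y _ _ _ (esym H) isT erefl;
  case: k {H} => [|[|[|[|[|[|[|[|[|k]]]]]]]]] [] //= _ _ [<-];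
  by rewrite !inE ?eqxx ?orbT.

Ltac comp0 :=
  let k := fresh "k" in let v := fresh "v" in let H := fresh "H" in
  move=> k v H; have := @decompP0 _ _ _ (esym H) erefl;
  case: k {H} => [|[|[|[|[|[|[|[|[|k]]]]]]]]] [] //= _ _ [<-];
  by rewrite !inE ?eqxx ?orbT.

Ltac memc := let t := fresh "t" in let Ht := fresh "Ht" in
  move=> t Ht; rewrite !inE in Ht; repeat (case/orP: Ht => Ht); move/eqP: Ht => ->.

Ltac stp0 L := apply: (@cnt_step _ L);
  [ by [] | by [] | comp0
  | memc; by []
  | memc; by []
  | by rewrite /= ?addn0 ].

Ltac stp Y L := apply: (@cnt_step _ L);
  [ by case: (phi Y) | by [] | comp Y
  | memc; by rewrite /= ?phi_cat -?catA
  | memc; by []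
  | by rewrite /= ?addn0 ].

Lemma stageE Y a b c e :
  Cnt (Y ++ [:: La; La; Lb]) a -> Cnt (Y ++ [:: La; La]) b ->
  Cnt (Y ++ [:: La]) c -> Cnt (Y ++ [:: La; Lb]) e ->
  [/\ Cnt (phi Y ++ [:: La; Lb; La; Lb; La]) (a + b),
      Cnt (phi Y ++ [:: La; Lb; La; Lb]) b,
      Cnt (phi Y ++ [:: La; Lb; La]) (e + c) &
      Cnt (phi Y ++ [:: La; Lb; La; La]) (e + c)].
Proof.
move=> HA HB HC HE.
have H0 : Cnt (Y ++ [:: La; Lb; Lb]) 0.
  by have := Cnt_bb (Y ++ [:: La]); rewrite -catA.
split.
- stp Y [:: (0, Y ++ [:: La; La; Lb], a); (1, Y ++ [:: La; La], b)].
- stp Y [:: (0, Y ++ [:: La; La], b)].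
- stp Y [:: (0, Y ++ [:: La; Lb], e); (1, Y ++ [:: La], c)].
- stp Y [:: (0, Y ++ [:: La; Lb; Lb], 0); (1, Y ++ [:: La; Lb], e); (2, Y ++ [:: La], c)].
Qed.

Lemma stageO Z a b c e :
  Cnt (Z ++ [:: La; Lb; La; Lb; La]) a -> Cnt (Z ++ [:: La; Lb; La; Lb]) b ->
  Cnt (Z ++ [:: La; Lb; La]) c -> Cnt (Z ++ [:: La; Lb; La; La]) e ->
  [/\ Cnt ((phi Z ++ [:: La; Lb; La; La; Lb]) ++ [:: La; La; Lb]) a,
      Cnt ((phi Z ++ [:: La; Lb; La; La; Lb]) ++ [:: La; La]) (b + c),
      Cnt ((phi Z ++ [:: La; Lb; La; La; Lb]) ++ [:: La]) (b + c) &
      Cnt ((phi Z ++ [:: La; Lb; La; La; Lb]) ++ [:: La; Lb]) e].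
Proof.
move=> HA HB HC HE.
have H0 : Cnt (Z ++ [:: La; Lb; La; Lb; Lb]) 0.
  by have := Cnt_bb (Z ++ [:: La; Lb; La]); rewrite -catA.
rewrite -!catA /=.
split.
- stp Z [:: (0, Z ++ [:: La; Lb; La; Lb; La], a)].
- stp Z [:: (0, Z ++ [:: La; Lb; La; Lb; Lb], 0); (1, Z ++ [:: La; Lb; La; Lb], b); (2, Z ++ [:: La; Lb; La], c)].
- stp Z [:: (0, Z ++ [:: La; Lb; La; Lb], b); (1, Z ++ [:: La; Lb; La], c)].
- stp Z [:: (0, Z ++ [:: La; Lb; La; La], e)].
Qed.

Lemma Cnt_eq w c c' : Cnt w c -> c = c' -> Cnt w c'.
Proof. by move=> H <-. Qed.

Lemma C_b : Cnt [:: Lb] 0.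
Proof.
apply: (@cnt_step _ [::]) => //.
move=> k v H; case: k H => [|k] H.
  by rewrite cats0 in H; case: v H => [|[] v].
by have := congr1 (last La) H; rewrite last_cat nseqS_rcons last_rcons.
Qed.
Lemma C_bb : Cnt [:: Lb; Lb] 0. Proof. exact: (Cnt_bb [::]). Qed.
Lemma C_abb : Cnt [:: La; Lb; Lb] 0. Proof. exact: (Cnt_bb [:: La]). Qed.
Lemma C_a : Cnt [:: La] 1.
Proof. have := C_b; have := Cnt_nil => *. stp0 [:: (0, [:: Lb], 0); (1, [::], 1)]. Qed.
Lemma C_ab : Cnt [:: La; Lb] 1.
Proof. have := C_a => *. stp0 [:: (0, [:: La], 1)]. Qed.
Lemma C_aa : Cnt [:: La; La] 1.
Proof. have := C_b; have := C_bb; have := Cnt_nil => *.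
stp0 [:: (0, [:: Lb; Lb], 0); (1, [:: Lb], 0); (2, [::], 1)]. Qed.
Lemma C_aba : Cnt [:: La; Lb; La] 2.
Proof. have := C_a; have := C_ab => *. stp0 [:: (0, [:: La; Lb], 1); (1, [:: La], 1)]. Qed.
Lemma C_abaab : Cnt [:: La; Lb; La; La; Lb] 2.
Proof. have := C_aba => *. stp0 [:: (0, [:: La; Lb; La], 2)]. Qed.
Lemma C_abaa : Cnt [:: La; Lb; La; La] 2.
Proof. have := C_a; have := C_ab; have := C_abb => *.
stp0 [:: (0, [:: La; Lb; Lb], 0); (1, [:: La; Lb], 1); (2, [:: La], 1)]. Qed.
Lemma C_abab : Cnt [:: La; Lb; La; Lb] 1.
Proof. have := C_aa => *. stp0 [:: (0, [:: La; La], 1)]. Qed.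

Fixpoint Ys j : seq letter :=
  match j with
  | 0 => [:: La; Lb]
  | j'.+1 => phi (phi (Ys j')) ++ [:: La; Lb; La; La; Lb]
  end.

Lemma fw_odd j : fw j.*2.+4 = Ys j ++ [:: La; La; Lb].
Proof.
elim: j => [|j IH] //.
rewrite doubleS -fw_phi -fw_phi IH /= !phi_cat /= -catA. by [].
Qed.

Lemma fw_even j : fw j.*2.+4.+1 = phi (Ys j) ++ [:: La; Lb; La; Lb; La].
Proof. by rewrite -fw_phi fw_odd phi_cat. Qed.

Lemma fibSS n : fib n.+2 = fib n.+1 + fib n. Proof. by []. Qed.

Lemma odd_stage j :
  [/\ Cnt (Ys j ++ [:: La; La; Lb]) (fib j.*2.+2 + 1),
      Cnt (Ys j ++ [:: La; La]) (fib j.*2.+3),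
      Cnt (Ys j ++ [:: La]) (fib j.*2.+3) &
      Cnt (Ys j ++ [:: La; Lb]) (fib j.*2.+2)].
Proof.
elim: j => [|j [HA HB HC HE]].
  split; [exact: C_abaab | exact: C_abaa | exact: C_aba | exact: C_abab].
have [EA EB EC EE] := stageE HA HB HC HE.
have [OA OB OC OE] := stageO EA EB EC EE.
change (Ys j.+1) with (phi (phi (Ys j)) ++ [:: La; Lb; La; La; Lb]).
rewrite doubleS; split.
- apply: (Cnt_eq OA); rewrite !fibSS; lia.
- apply: (Cnt_eq OB); rewrite !fibSS; lia.
- apply: (Cnt_eq OC); rewrite !fibSS; lia.
- apply: (Cnt_eq OE); rewrite !fibSS; lia.
Qed.

Lemma even_stage j : Cnt (phi (Ys j) ++ [:: La; Lb; La; Lb; La]) (fib j.*2.+4 + 1).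
Proof.
have [HA HB HC HE] := odd_stage j.
have [EA _ _ _] := stageE HA HB HC HE.
apply: (Cnt_eq EA); rewrite !fibSS; lia.
Qed.

Lemma size_fw n : size (fw n) = fib n.+1.
Proof.
suff: size (fw n) = fib n.+1 /\ size (fw n.+1) = fib n.+2 by case.
elim: n => [|n [IH1 IH2]] //; split => //.
by rewrite fwSS size_cat IH1 IH2.
Qed.

Lemma fw_prefix n m : 1 <= n -> n <= m -> exists r, fw m = fw n ++ r.
Proof.
move=> Hn; elim: m => [|m IH] Hm; first by lia.
case: (ltngtP n m.+1) Hm => // Hlt _; last by exists [::]; rewrite Hlt cats0.
have [r Hr] := IH Hlt.
case: m Hlt IH Hr => [|m] Hlt IH Hr; first by lia.
by exists (r ++ fw m); rewrite fwSS Hr catA.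
Qed.

Lemma fib_pos n : 0 < fib n.+1.
Proof.
suff: 0 < fib n.+1 /\ 0 < fib n.+2 by case.
elim: n => [|n [IH1 IH2]] //; split => //.
by rewrite fibSS; lia.
Qed.

Lemma fib_ge n : n <= fib n.+1.
Proof.
suff: n <= fib n.+1 /\ n.+1 <= fib n.+2 by case.
elim: n => [|n [IH1 IH2]] //; split => //.
by rewrite fibSS; have := fib_pos n; lia.
Qed.

Lemma fprefix_fw n : 1 <= n -> fprefix (fib n.+1) = fw n.
Proof.
move=> Hn; rewrite /fprefix /fword.
have [r ->] := @fw_prefix n (fib n.+1).+1 Hn (leqW (fib_ge n)).
by rewrite -size_fw take_size_cat.
Qed.

Theorem corollary2 (k : nat) : 1 <= k ->
  V_is (fib (2 * k)) (fib (2 * k - 2) + 1) /\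
  V_is (fib (2 * k + 1)) (fib (2 * k - 2) + 1).
Proof.
move=> Hk.
case: k Hk => [|[|[|j]]] // _.
- split; [change (Cnt (fprefix 1) 1) | change (Cnt (fprefix 2) 1)].
    exact: C_a.
  exact: C_ab.
- split; [change (Cnt (fprefix 3) 2) | change (Cnt (fprefix 5) 2)].
    exact: C_aba.
  exact: C_abaab.
- have E1 : 2 * j.+3 = (j.*2.+4.+1).+1 by lia.
  have E2 : 2 * j.+3 + 1 = ((j.+1).*2.+4).+1 by lia.
  have E3 : 2 * j.+3 - 2 = j.*2.+4 by lia.
  rewrite E2 E3 E1; split.
  + change (Cnt (fprefix (fib (j.*2.+4.+1).+1)) (fib j.*2.+4 + 1)).
    rewrite fprefix_fw // fw_even; exact: even_stage.
  + change (Cnt (fprefix (fib ((j.+1).*2.+4).+1)) (fib j.*2.+4 + 1)).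
    rewrite fprefix_fw // fw_odd.
    have [HA _ _ _] := odd_stage j.+1.
    by move: HA; rewrite doubleS.
Qed.
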